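(* Let $R$ be a commutative Noetherian ring of prime characteristic $p$, let $(H^{(\lambda)})_{\lambda\in\Lambda}$ be a non-empty family of $\mathbb{Z}$-graded left $R[x,f]$-modules, and let $H:=\prod'_{\lambda\in\Lambda}H^{(\lambda)}$. Then: (i) $\mathcal{G}(H)=\left\{\bigcap_{\lambda\in\Lambda}\mathfrak{B}_\lambda : \mathfrak{B}_\lambda\in\mathcal{G}(H^{(\lambda)})\text{ for all }\lambda\in\Lambda\right\}$; (ii) consequently, if there is a set $\mathcal{G}'$ of graded two-sided ideals of $R[x,f]$ with $\mathcal{G}(H^{(\lambda)})=\mathcal{G}'$ for all $\lambda\in\Lambda$, then $\mathcal{G}(H)=\mathcal{G}'$; (iii) $\operatorname{HSL}(H)=\sup\{\operatorname{HSL}(H^{(\lambda)}):\lambda\in\Lambda\}$ (even if some $\operatorname{HSL}(H^{(\mu)})=\infty$); thus $H$ is $x$-torsion-free if and only if every $H^{(\lambda)}$ is $x$-torsion-free; (iv) if $\operatorname{HSL}(H)$ is finite, then $\Gamma_x(H)=\prod'_{\lambda\in\Lambda}\Gamma_x(H^{(\lambda)})$ and there is a homogeneous isomorphism of graded left $R[x,f]$-modules $H/\Gamma_x(H)\cong\prod'_{\lambda\in\Lambda}H^{(\lambda)}/\Gamma_x(H^{(\lambda)})$.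
   Context: $R[x,f]$ denotes the Frobenius skew polynomial ring over $R$: as a left $R$-module it is free on $(x^i)_{i\in\mathbb{N}_0}$, with multiplication subject to $xr = r^px$; it is graded with $n$th component $Rx^n$. For $\mathbb{Z}$-graded left $R[x,f]$-modules $H^{(\lambda)}=\bigoplus_n H^{(\lambda)}_n$, $\prod'_{\lambda}H^{(\lambda)}$ denotes the graded left $R[x,f]$-module $\bigoplus_{n\in\mathbb{Z}}\prod_{\lambda}H^{(\lambda)}_n$ with $x$ acting componentwise, $x(h_n^{(\lambda)})_\lambda=(xh_n^{(\lambda)})_\lambda$ (the product in the category of graded left $R[x,f]$-modules and degree-$0$ homogeneous homomorphisms). For a left $R[x,f]$-module $M$: $\operatorname{grann}_{R[x,f]}M$ is the largest graded two-sided ideal of $R[x,f]$ annihilating $M$; $\mathcal{G}(M)$ is the set of graded annihilators of all $R[x,f]$-submodules of $M$; $\Gamma_x(M)=\{m\in M: x^jm=0\text{ for some }j\in\mathbb{N}\}$ is the $x$-torsion submodule, and $M$ is $x$-torsion-free if $\Gamma_x(M)=0$; $\operatorname{HSL}(M)$ is the least $e\in\mathbb{N}_0$ with $x^e\Gamma_x(M)=0$, and $\operatorname{HSL}(M)=\infty$ if no such $e$ exists. *)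

(* Defs.v *)
From HB Require Import structures.
From mathcomp Require Import all_boot all_order all_algebra.
From Stdlib Require Import ClassicalDescription.
Set Implicit Arguments.
Unset Strict Implicit.
Unset Printing Implicit Defensive.
Import GRing.Theory.
Local Open Scope ring_scope.

Definition ring_ideal (R : comNzRingType) (I : R -> Prop) : Prop :=
  [/\ I 0, (forall a b, I a -> I b -> I (a + b)) & (forall r a, I a -> I (r * a))].

Definition noetherian (R : comNzRingType) : Prop :=
  forall I : nat -> R -> Prop, (forall n, ring_ideal (I n)) ->
    (forall n a, I n a -> I n.+1 a) ->
    exists N, forall n, (N <= n)%N -> forall a, I n a -> I N a.

(* The Frobenius skew polynomial ring R[x,f]: underlying left R-module   *)
(* {poly R} (free on the x^i = 'X^i), with skew multiplication          *)
(*   (r x^i)(s x^j) = r s^(p^i) x^(i+j).                                *)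
Section Skew.
Variables (R : comNzRingType) (p : nat).

Definition smul (a b : {poly R}) : {poly R} :=
  \sum_(i < size a) \sum_(j < size b) ((a`_i * b`_j ^+ (p ^ i)) *: 'X^(i + j)).

Definition graded_ideal (I : {poly R} -> Prop) : Prop :=
  [/\ I 0, (forall a b, I a -> I b -> I (a + b)), (forall a, I a -> I (- a)),
      (forall a c, I a -> I (smul c a) /\ I (smul a c)) &
      (forall a i, I a -> I (a`_i *: 'X^i))].
End Skew.

(* Presentation of a Z-graded left R[x,f]-module: a carrier predicate    *)
(* inside an ambient type, an equality (setoid, to allow quotients),     *)
(* the R-module operations, the action of x, and the homogeneous         *)
(* elements of each degree.                                              *)
Record gmod (R : comNzRingType) := GMod {
  gcar : Type;
  geq : gcar -> gcar -> Prop;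
  gin : gcar -> Prop;
  g0 : gcar;
  gadd : gcar -> gcar -> gcar;
  gopp : gcar -> gcar;
  gscale : R -> gcar -> gcar;
  gx : gcar -> gcar;
  ghom : int -> gcar -> Prop
}.

Section GMod.
Variable R : comNzRingType.

Definition gsum (M : gmod R) (s : seq int) (c : int -> gcar M) : gcar M :=
  foldr (fun n acc => gadd (c n) acc) (@g0 _ M) s.

Definition act (M : gmod R) (a : {poly R}) (v : gcar M) : gcar M :=
  foldr (fun i acc => gadd (gscale a`_i (iter i (@gx _ M) v)) acc) (@g0 _ M)
        (index_iota 0 (size a)).

Definition submodule (M : gmod R) (N : gcar M -> Prop) : Prop :=
  (forall v, N v -> gin v) /\ N (@g0 _ M) /\
  (forall u v, N u -> N v -> N (gadd u v)) /\ (forall v, N v -> N (gopp v)) /\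
  (forall r v, N v -> N (gscale r v)) /\ (forall v, N v -> N (gx v)).

Definition annihilates (M : gmod R) (I : {poly R} -> Prop) (N : gcar M -> Prop) :=
  forall a v, I a -> N v -> geq (act a v) (@g0 _ M).

Variable p : nat.

Definition is_grann (M : gmod R) (N : gcar M -> Prop) (I : {poly R} -> Prop) :=
  [/\ graded_ideal p I, @annihilates M I N &
      forall J, graded_ideal p J -> @annihilates M J N -> forall a, J a -> I a].

Definition InG (M : gmod R) (I : {poly R} -> Prop) : Prop :=
  exists N, @submodule M N /\ @is_grann M N I.

Definition gamma (M : gmod R) (v : gcar M) : Prop :=
  gin v /\ exists j : nat, geq (iter j (@gx _ M) v) (@g0 _ M).

Definition torsion_free (M : gmod R) : Prop :=
  forall v, @gamma M v -> geq v (@g0 _ M).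

Definition HSL_le (M : gmod R) (e : nat) : Prop :=
  forall v, @gamma M v -> geq (iter e (@gx _ M) v) (@g0 _ M).

Definition pb (P : Prop) : bool :=
  if excluded_middle_informative P then true else false.

Lemma pbP (P : Prop) : reflect P (pb P).
Proof. by rewrite /pb; case: excluded_middle_informative => h; constructor. Qed.

Lemma ex_pb (Q : nat -> Prop) : (exists e, Q e) -> exists e, pb (Q e).
Proof. by case=> e he; exists e; apply/pbP. Qed.

(* HSL(M) in N_0 \cup {oo}; None stands for oo *)
Definition HSL (M : gmod R) : option nat :=
  match excluded_middle_informative (exists e, HSL_le M e) with
  | left h => Some (ex_minn (ex_pb h))
  | right _ => None
  end.

(* A Z-graded left R[x,f]-module given by an R-module V, the action xop  *)
(* of x, and the homogeneous components Hc n (n : int).                 *)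
Definition graded_rxf (V : lmodType R) (xop : V -> V) (Hc : int -> V -> Prop) :=
  (forall u v, xop (u + v) = xop u + xop v) /\
      (forall r v, xop (r *: v) = r ^+ p *: xop v) /\
      (forall n, [/\ Hc n 0, (forall u v, Hc n u -> Hc n v -> Hc n (u + v)) &
                 (forall r v, Hc n v -> Hc n (r *: v))]) /\
      (forall n v, Hc n v -> Hc (n + 1) (xop v)) /\
      (forall v, exists (s : seq int) (c : int -> V),
          [/\ uniq s, (forall n, Hc n (c n)) & v = \sum_(n <- s) c n]) /\
      (forall (s : seq int) (c : int -> V), uniq s -> (forall n, Hc n (c n)) ->
          \sum_(n <- s) c n = 0 -> forall n, n \in s -> c n = 0).

Definition single (V : lmodType R) (xop : V -> V) (Hc : int -> V -> Prop) : gmod R :=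
  @GMod R V (@eq V) (fun _ => True) 0 +%R -%R *:%R xop Hc.

(* prod'_l M_l = bigoplus_n prod_l (M_l)_n, viewed inside prod_l M_l as the *)
(* families whose components are all supported in one finite set of degrees *)
Definition gprod (L : Type) (M : L -> gmod R) : gmod R :=
  @GMod R (forall l, gcar (M l))
    (fun a b => forall l, geq (a l) (b l))
    (fun h => exists s : seq int, forall l, exists c : int -> gcar (M l),
        (forall n, ghom n (c n)) /\ geq (h l) (gsum s c))
    (fun l => @g0 _ (M l))
    (fun a b l => gadd (a l) (b l))
    (fun a l => gopp (a l))
    (fun r a l => gscale r (a l))
    (fun a l => gx (a l))
    (fun n h => forall l, ghom n (h l)).

Definition restrict (M : gmod R) (P : gcar M -> Prop) : gmod R :=
  @GMod R (gcar M) (@geq _ M) (fun v => gin v /\ P v) (@g0 _ M) (@gadd _ M)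
    (@gopp _ M) (@gscale _ M) (@gx _ M) (fun n v => ghom n v /\ P v).

Definition quot (M : gmod R) (N : gcar M -> Prop) : gmod R :=
  @GMod R (gcar M) (fun a b => N (gadd a (gopp b))) (@gin _ M) (@g0 _ M)
    (@gadd _ M) (@gopp _ M) (@gscale _ M) (@gx _ M)
    (fun n v => exists w, ghom n w /\ N (gadd v (gopp w))).

Definition giso (M1 M2 : gmod R) : Prop :=
  exists phi : gcar M1 -> gcar M2,
  (forall a, gin a -> gin (phi a)) /\
      (forall a b, gin a -> gin b -> geq a b -> geq (phi a) (phi b)) /\
      (forall a b, gin a -> gin b -> geq (phi (gadd a b)) (gadd (phi a) (phi b))) /\
      (forall r a, gin a -> geq (phi (gscale r a)) (gscale r (phi a))) /\
      (forall a, gin a -> geq (phi (gx a)) (gx (phi a))) /\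
      (forall n a, gin a -> ghom n a -> ghom n (phi a)) /\
      (forall a b, gin a -> gin b -> geq (phi a) (phi b) -> geq a b) /\
      (forall b, gin b -> exists a, gin a /\ geq (phi a) b).

End GMod.

Arguments gsum {R} M s c.
Arguments act {R} M a v.
Arguments submodule {R} M N.
Arguments annihilates {R} M I N.
Arguments is_grann {R} p M N I.
Arguments InG {R} p M I.
Arguments gamma {R} M v.
Arguments torsion_free {R} M.
Arguments HSL_le {R} M e.
Arguments HSL {R} M.
Arguments graded_rxf {R} p {V} xop Hc.
Arguments single {R} {V} xop Hc.
Arguments gprod {R} {L} M.
Arguments restrict {R} M P.
Arguments quot {R} M N.
Arguments giso {R} M1 M2.

Definition ole (a b : option nat) : bool :=
  match a, b with
  | _, None => true
  | None, Some _ => false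
  | Some m, Some n => (m <= n)%N
  end.

(* Main.v *)
Require Import Defs.
From HB Require Import structures.
From mathcomp Require Import all_boot all_order all_algebra.
From Stdlib Require Import ClassicalDescription IndefiniteDescription Eqdep.
Set Implicit Arguments.
Unset Strict Implicit.
Unset Printing Implicit Defensive.
Import GRing.Theory.
Local Open Scope ring_scope.

Lemma dchoice (A : Type) (B : A -> Type) (P : forall a, B a -> Prop) :
  (forall a, exists b, P a b) -> exists f : forall a, B a, forall a, P a (f a).
Proof.
move=> h; exists (fun a => proj1_sig (constructive_indefinite_description _ (h a))).
by move=> a; case: (constructive_indefinite_description _ (h a)).
Qed.

Lemma foldr_sum (V : zmodType) (I : Type) (r : seq I) (F : I -> V) :
  foldr (fun i acc => F i + acc) 0 r = \sum_(i <- r) F i.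
Proof. elim: r => [|i r IH]; first by rewrite big_nil. by rewrite big_cons -IH. Qed.

Section Single.
Variables (R : comNzRingType) (p : nat) (V : lmodType R) (xop : V -> V)
  (Hc : int -> V -> Prop).
Hypothesis pchar_p : p \in [pchar R].
Hypothesis gr : graded_rxf p xop Hc.

Let M := single xop Hc.

Lemma xopD u v : xop (u + v) = xop u + xop v.
Proof. by case: gr. Qed.
Lemma xopZ r v : xop (r *: v) = r ^+ p *: xop v.
Proof. by case: gr => _ []. Qed.
Lemma xop0 : xop 0 = 0.
Proof. by apply: (@addrI _ (xop 0)); rewrite -xopD !addr0. Qed.
Lemma xopN v : xop (- v) = - xop v.
Proof. by apply: (@addrI _ (xop v)); rewrite -xopD !subrr xop0. Qed.

Lemma iterD0 j u v : iter j xop (u + v) = iter j xop u + iter j xop v.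
Proof. by elim: j => //= j ->; rewrite xopD. Qed.
Lemma iter0 j : iter j xop 0 = 0.
Proof. by elim: j => //= j ->; rewrite xop0. Qed.
Lemma iterN j v : iter j xop (- v) = - iter j xop v.
Proof. by elim: j => //= j ->; rewrite xopN. Qed.
Lemma iter_sum j (I : Type) (r : seq I) (F : I -> V) :
  iter j xop (\sum_(i <- r) F i) = \sum_(i <- r) iter j xop (F i).
Proof. elim: r => [|i r IH]; first by rewrite !big_nil iter0. by rewrite !big_cons iterD0 IH. Qed.
Lemma iterZ j r v : iter j xop (r *: v) = r ^+ (p ^ j) *: iter j xop v.
Proof.
elim: j => [|j IH] /=; first by rewrite expr1.
by rewrite IH xopZ -exprM expnSr.
Qed.

Lemma Hc0 n : Hc n 0. Proof. by case: gr => _ [_ [H _]]; case: (H n). Qed.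
Lemma HcD n u v : Hc n u -> Hc n v -> Hc n (u + v).
Proof. by case: gr => _ [_ [H _]]; case: (H n) => _ h _; apply: h. Qed.
Lemma HcZ n r v : Hc n v -> Hc n (r *: v).
Proof. by case: gr => _ [_ [H _]]; case: (H n) => _ _ h; apply: h. Qed.
Lemma HcN n v : Hc n v -> Hc n (- v).
Proof. by move=> h; rewrite -scaleN1r; apply: HcZ. Qed.
Lemma Hcx n v : Hc n v -> Hc (n + 1) (xop v).
Proof. by case: gr => _ [_ [_ []]] h _; apply: h. Qed.
Lemma Hciter j n v : Hc n v -> Hc (n + j%:Z) (iter j xop v).
Proof.
elim: j => [|j IH] /= h; first by rewrite addr0.
by rewrite -[j.+1]addn1 PoszD addrA; apply/Hcx/IH.
Qed.
Lemma Hc_dec v : exists (s : seq int) (c : int -> V),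
  [/\ uniq s, (forall n, Hc n (c n)) & v = \sum_(n <- s) c n].
Proof. by case: gr => _ [_ [_ [_ [h _]]]]; apply: h. Qed.
Lemma Hc_uniq (s : seq int) (c : int -> V) : uniq s -> (forall n, Hc n (c n)) ->
  \sum_(n <- s) c n = 0 -> forall n, n \in s -> c n = 0.
Proof. by case: gr => _ [_ [_ [_ [_ h]]]]; apply: h. Qed.

Lemma gsumE (s : seq int) (c : int -> V) : gsum M s c = \sum_(n <- s) c n.
Proof. by rewrite /gsum foldr_sum. Qed.

Lemma actE (a : {poly R}) (v : V) : act M a v = \sum_(0 <= i < size a) a`_i *: iter i xop v.
Proof. by rewrite /act foldr_sum. Qed.

Lemma actE_le n (a : {poly R}) (v : V) : (size a <= n)%N ->
  act M a v = \sum_(0 <= i < n) a`_i *: iter i xop v.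
Proof.
move=> h; rewrite actE (big_cat_nat (leq0n _) h) /=.
rewrite [X in _ = _ + X]big1_seq ?addr0 // => i /andP[_].
by rewrite mem_index_iota => /andP[hi _]; rewrite nth_default ?scale0r.
Qed.

Lemma p_gt0 : (0 < p)%N.
Proof. by apply: prime_gt0; case/andP: pchar_p. Qed.

Lemma smulE n m (a b : {poly R}) : (size a <= n)%N -> (size b <= m)%N ->
  smul p a b = \sum_(0 <= i < n) \sum_(0 <= j < m) ((a`_i * b`_j ^+ (p ^ i)) *: 'X^(i + j)).
Proof.
move=> ha hb; rewrite /smul -(big_mkord xpredT (fun i => \sum_(j < size b) ((a`_i * b`_j ^+ (p ^ i)) *: 'X^(i + j)))) (big_cat_nat (leq0n _) ha) /=.
rewrite [X in _ = _ + X]big1_seq ?addr0; last first.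
  move=> i /andP[_]; rewrite mem_index_iota => /andP[hi _].
  by rewrite big1 // => j _; rewrite nth_default // mul0r scale0r.
apply: eq_bigr => i _; rewrite -(big_mkord xpredT (fun j => (a`_i * b`_j ^+ (p ^ i)) *: 'X^(i + j))) (big_cat_nat (leq0n _) hb) /=.
rewrite [X in _ = _ + X]big1_seq ?addr0 // => j /andP[_].
rewrite mem_index_iota => /andP[hj _].
by rewrite (nth_default _ hj) expr0n expn_eq0 eqn0Ngt p_gt0 /= mulr0 scale0r.
Qed.

Lemma act0p (v : V) : act M 0 v = 0.
Proof. by rewrite actE size_poly0 big_geq. Qed.

Lemma act_add (a b : {poly R}) (v : V) : act M (a + b) v = act M a v + act M b v.
Proof.
rewrite !(@actE_le (maxn (size a) (size b))) ?leq_maxl ?leq_maxr ?size_polyD //.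
by rewrite -big_split /=; apply: eq_bigr => i _; rewrite coefD scalerDl.
Qed.

Lemma act_sum (I : Type) (r : seq I) (F : I -> {poly R}) (v : V) :
  act M (\sum_(i <- r) F i) v = \sum_(i <- r) act M (F i) v.
Proof.
elim: r => [|i r IH]; first by rewrite !big_nil act0p.
by rewrite !big_cons act_add IH.
Qed.

Lemma act_mono c k (v : V) : act M (c *: 'X^k) v = c *: iter k xop v.
Proof.
rewrite (@actE_le k.+1); last by rewrite (leq_trans (size_scale_leq _ _)) ?size_polyXn.
rewrite big_nat_recr //= coefZ coefXn eqxx mulr1 big1_seq ?add0r // => i /andP[_].
rewrite mem_index_iota => /andP[_ hi].
by rewrite coefZ coefXn (ltn_eqF hi) mulr0 scale0r.
Qed.

Lemma act_vD (a : {poly R}) (u w : V) : act M a (u + w) = act M a u + act M a w.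
Proof.
by rewrite !actE -big_split /=; apply: eq_bigr => i _; rewrite iterD0 scalerDr.
Qed.

Lemma act_v0 (a : {poly R}) : act M a 0 = 0.
Proof. by rewrite actE big1 // => i _; rewrite iter0 scaler0. Qed.

Lemma act_vN (a : {poly R}) (w : V) : act M a (- w) = - act M a w.
Proof.
by rewrite !actE -sumrN; apply: eq_bigr => i _; rewrite iterN scalerN.
Qed.

Lemma act_scale (a : {poly R}) r (w : V) : act M a (r *: w) = act M (smul p a r%:P) w.
Proof.
rewrite (@smulE (size a) 1) // ?size_polyC_leq1 // act_sum actE.
apply: eq_bigr => i _; rewrite big_nat1 act_mono addn0 coefC eqxx.
by rewrite iterZ scalerA.
Qed.

Lemma act_x (a : {poly R}) (w : V) : act M a (xop w) = act M (smul p a 'X) w.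
Proof.
rewrite (@smulE (size a) 2) // ?size_polyX // act_sum actE.
apply: eq_bigr => i _; rewrite big_nat_recr //= big_nat1 act_add !act_mono.
rewrite !coefX /= expr0n expn_eq0 eqn0Ngt p_gt0 /= mulr0 scale0r add0r.
by rewrite expr1n mulr1 addn1 -iterSr.
Qed.

Lemma frobD i (x y : R) : (x + y) ^+ (p ^ i) = x ^+ (p ^ i) + y ^+ (p ^ i).
Proof.
apply: exprDn_pchar; rewrite pnatX; apply/orP; left.
by rewrite pnatE //; case/andP: pchar_p.
Qed.

Lemma smulDl (a b c : {poly R}) : smul p (a + b) c = smul p a c + smul p b c.
Proof.
have hn := size_polyD a b.
rewrite !(@smulE (maxn (size a) (size b)) (size c)) ?leq_maxl ?leq_maxr //.
rewrite -big_split /=; apply: eq_bigr => i _; rewrite -big_split /=.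
by apply: eq_bigr => j _; rewrite coefD mulrDl scalerDl.
Qed.

Lemma smulDr (a b c : {poly R}) : smul p c (a + b) = smul p c a + smul p c b.
Proof.
have hn := size_polyD a b.
rewrite !(@smulE (size c) (maxn (size a) (size b))) ?leq_maxl ?leq_maxr //.
rewrite -big_split /=; apply: eq_bigr => i _; rewrite -big_split /=.
by apply: eq_bigr => j _; rewrite coefD frobD mulrDr scalerDl.
Qed.

Definition sumI (J1 J2 : {poly R} -> Prop) a :=
  exists a1 a2, [/\ J1 a1, J2 a2 & a = a1 + a2].

Lemma sumI_graded J1 J2 : graded_ideal p J1 -> graded_ideal p J2 ->
  graded_ideal p (sumI J1 J2).
Proof.
case=> z1 d1 n1 m1 h1 [z2 d2 n2 m2 h2]; split.
- by exists 0, 0; rewrite addr0.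
- move=> _ _ [a1 [a2 [A1 A2 ->]]] [b1 [b2 [B1 B2 ->]]].
  by exists (a1 + b1), (a2 + b2); split; [apply: d1|apply: d2|rewrite addrACA].
- move=> _ [a1 [a2 [A1 A2 ->]]].
  by exists (- a1), (- a2); split; [apply: n1|apply: n2|rewrite opprD].
- move=> _ c [a1 [a2 [A1 A2 ->]]]; split.
  + exists (smul p c a1), (smul p c a2); split; [by case: (m1 _ c A1)|by case: (m2 _ c A2)|].
    by rewrite smulDr.
  + exists (smul p a1 c), (smul p a2 c); split; [by case: (m1 _ c A1)|by case: (m2 _ c A2)|].
    by rewrite smulDl.
- move=> _ i [a1 [a2 [A1 A2 ->]]].
  by exists (a1`_i *: 'X^i), (a2`_i *: 'X^i); split; [apply: h1|apply: h2|rewrite coefD scalerDl].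
Qed.

Lemma sumI_ann J1 J2 (N : V -> Prop) : annihilates M J1 N -> annihilates M J2 N ->
  annihilates M (sumI J1 J2) N.
Proof.
move=> A1 A2 _ v [a1 [a2 [h1 h2 ->]]] hv /=.
by rewrite act_add (A1 _ _ h1 hv) (A2 _ _ h2 hv) addr0.
Qed.

Definition Kann (N : V -> Prop) a :=
  exists J, [/\ graded_ideal p J, annihilates M J N & J a].

Lemma Kann_grann (N : V -> Prop) : is_grann p M N (Kann N).
Proof.
split.
- split.
  + exists (fun a => a = 0); split => //; last by move=> a v -> _; rewrite /= act0p.
    split => //.
    * by move=> a b -> ->; rewrite addr0.
    * by move=> a ->; rewrite oppr0.
    * move=> a c ->; rewrite /smul size_poly0 !big_ord0; split => //.
      by apply: big1 => i _; rewrite big_ord0.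
    * by move=> a i ->; rewrite coef0 scale0r.
  + move=> a b [J1 [g1 n1 j1]] [J2 [g2 n2 j2]]; exists (sumI J1 J2); split.
    * exact: sumI_graded.
    * exact: sumI_ann.
    * by exists a, b.
  + by move=> a [J [g n j]]; exists J; split => //; case: g => _ _ h _ _; apply: h.
  + move=> a c [J [g n j]]; case: (g) => _ _ _ h _; case: (h a c j) => ??.
    by split; exists J.
  + by move=> a i [J [g n j]]; exists J; split => //; case: g => _ _ _ _ h; apply: h.
- by move=> a v [J [g n j]] hv; apply: n.
- by move=> J g n a j; exists J.
Qed.
End Single.

Lemma is_grann_ext (R : comNzRingType) p (M : gmod R) (N : gcar M -> Prop) (I I' : {poly R} -> Prop) :
  (forall a, I a <-> I' a) -> is_grann p M N I -> is_grann p M N I'.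
Proof.
move=> e [[z d n m h] an mx]; split.
- split.
  + by apply/e.
  + by move=> a b /e ha /e hb; apply/e; apply: d.
  + by move=> a /e ha; apply/e; apply: n.
  + by move=> a c /e ha; case: (m a c ha) => ??; split; apply/e.
  + by move=> a i /e ha; apply/e; apply: h.
- by move=> a v /e; apply: an.
- by move=> J g nJ a ja; apply/e; apply: mx g nJ a ja.
Qed.

Lemma InG_ext (R : comNzRingType) p (M : gmod R) (I I' : {poly R} -> Prop) :
  (forall a, I a <-> I' a) -> InG p M I -> InG p M I'.
Proof. by move=> e [N [sN g]]; exists N; split => //; apply: is_grann_ext g. Qed.

Lemma graded_ideal_cap (R : comNzRingType) p (L : Type) (B : L -> {poly R} -> Prop) :
  (forall l, graded_ideal p (B l)) -> graded_ideal p (fun a => forall l, B l a).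
Proof.
move=> g; split.
- by move=> l; case: (g l).
- by move=> a b ha hb l; case: (g l) => _ d _ _ _; apply: d.
- by move=> a ha l; case: (g l) => _ _ n _ _; apply: n.
- move=> a c ha; split=> l; case: (g l) => _ _ _ m _; by case: (m a c (ha l)).
- by move=> a i ha l; case: (g l) => _ _ _ _ h; apply: h.
Qed.

Section SingleCap.
Variables (R : comNzRingType) (p : nat) (V : lmodType R) (xop : V -> V)
  (Hc : int -> V -> Prop).
Hypothesis pchar_p : p \in [pchar R].
Hypothesis gr : graded_rxf p xop Hc.
Let M := single xop Hc.

Lemma InG_cap (L : Type) (B : L -> {poly R} -> Prop) :
  (forall l, InG p M (B l)) -> InG p M (fun a => forall l, B l a).
Proof.
move=> hB; have [Nf hN] := dchoice hB.
pose S v := forall T, submodule M T -> (forall l w, Nf l w -> T w) -> T v.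
have subS : submodule M S.
  split; first by [].
  split; first by move=> T [_ [h _]] _.
  split; first by move=> u v hu hv T sT hT; case: (sT) => _ [_ [h _]]; apply: h; [apply: hu|apply: hv].
  split; first by move=> v hv T sT hT; case: (sT) => _ [_ [_ [h _]]]; apply: h; apply: hv.
  split; first by move=> r v hv T sT hT; case: (sT) => _ [_ [_ [_ [h _]]]]; apply: h; apply: hv.
  by move=> v hv T sT hT; case: (sT) => _ [_ [_ [_ [_ h]]]]; apply: h; apply: hv.
have gB : forall l, graded_ideal p (B l) by move=> l; case: (hN l) => _ [].
exists S; split => //; split.
- exact: graded_ideal_cap.
- move=> a v ha hv.
  pose T w := forall a, (forall l, B l a) -> act M a w = 0.
  suff: T v by move/(_ a ha).
  apply: hv.
  + split; first by [].
    split; first by move=> b _; apply: (act_v0 gr).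
    split; first by move=> u w hu hw b hb; rewrite (act_vD gr) hu // hw // addr0.
    split; first by move=> w hw b hb; rewrite (act_vN gr) hw // oppr0.
    split.
    * move=> r w hw b hb; rewrite (act_scale pchar_p gr); apply: hw => l.
      by case: (gB l) => _ _ _ m _; case: (m b r%:P (hb l)).
    * move=> w hw b hb; rewrite (act_x xop Hc pchar_p); apply: hw => l.
      by case: (gB l) => _ _ _ m _; case: (m b 'X (hb l)).
  + move=> l w hw b hb; case: (hN l) => _ [_ an _]; exact: (an b w (hb l) hw).
- move=> J gJ aJ a ja l; case: (hN l) => _ [_ _ mx]; apply: (mx J gJ) => //.
  by move=> b w jb hw; apply: aJ => // T sT hT; apply: hT hw.
Qed.
End SingleCap.

Lemma sum_undup (R : comNzRingType) (T : eqType) (W : lmodType R) (s : seq T) (c : T -> W) :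
  \sum_(n <- s) c n = \sum_(n <- undup s) (count_mem n s)%:R *: c n.
Proof.
rewrite -big_undup_iterop_count; apply: eq_bigr => n _.
rewrite Monoid.Theory.iteropE scaler_nat; elim: (count_mem n s) => [|k IH] //=.
by rewrite IH mulrS.
Qed.

Lemma sum_ext (T : eqType) (W : zmodType) (s t : seq T) (c : T -> W) :
  uniq s -> uniq t -> {subset s <= t} ->
  \sum_(n <- s) c n = \sum_(n <- t) (if n \in s then c n else 0).
Proof.
move=> us ut st; rewrite -big_mkcond -big_filter; apply: perm_big.
apply: uniq_perm => //; first exact: filter_uniq.
by move=> x; rewrite mem_filter; case hx: (x \in s) => //=; rewrite st.
Qed.

Unset Implicit Arguments.
Section Prod.
Variables (R : comNzRingType) (p : nat) (L : Type) (V : L -> lmodType R)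
  (xop : forall l, V l -> V l) (Hc : forall l, int -> V l -> Prop).
Hypothesis pchar_p : p \in [pchar R].
Hypothesis gr : forall l, graded_rxf p (xop l) (Hc l).
Let Hs := fun l => single (xop l) (Hc l).
Let H := gprod Hs.

Lemma ginH (h : gcar H) : @gin _ H h <-> exists s : seq int, forall l,
  exists c : int -> V l, (forall n, Hc l n (c n)) /\ h l = \sum_(n <- s) c n.
Proof.
split; case=> s hs; exists s => l; case: (hs l) => c [h1 h2]; exists c; split => //.
  by move: h2; rewrite /= gsumE.
by rewrite /= gsumE.
Qed.

Lemma ginH_uniq (h : gcar H) : @gin _ H h -> exists s : seq int, uniq s /\ forall l,
  exists c : int -> V l, (forall n, Hc l n (c n)) /\ h l = \sum_(n <- s) c n.
Proof.
case/ginH=> s hs; exists (undup s); split; first exact: undup_uniq.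
move=> l; case: (hs l) => c [h1 ->]; exists (fun n => (count_mem n s)%:R *: c n); split.
  by move=> n; apply: (HcZ (gr l)).
exact: sum_undup.
Qed.

Lemma ginH0 : @gin _ H (@g0 _ H).
Proof.
apply/ginH; exists [::] => l; exists (fun _ => 0); split; last by rewrite big_nil.
by move=> n; apply: (Hc0 (gr l)).
Qed.

Lemma ginHD a b : @gin _ H a -> @gin _ H b -> @gin _ H (@gadd _ H a b).
Proof.
case/ginH_uniq => s1 [u1 h1] /ginH_uniq [s2 [u2 h2]]; apply/ginH.
exists (undup (s1 ++ s2)) => l.
case: (h1 l) => c1 [hc1 e1]; case: (h2 l) => c2 [hc2 e2].
exists (fun n => (if n \in s1 then c1 n else 0) + (if n \in s2 then c2 n else 0)); split.
  by move=> n; apply: (HcD (gr l)); case: ifP => _ //; apply: (Hc0 (gr l)).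
rewrite big_split /= /= e1 e2 -!sum_ext ?undup_uniq // => x hx;
  by rewrite mem_undup mem_cat hx ?orbT.
Qed.

Lemma ginHN a : @gin _ H a -> @gin _ H (@gopp _ H a).
Proof.
case/ginH => s hs; apply/ginH; exists s => l; case: (hs l) => c [hc e].
exists (fun n => - c n); split; first by move=> n; apply: (HcN (gr l)).
by rewrite /= e sumrN.
Qed.

Lemma ginHZ r a : @gin _ H a -> @gin _ H (@gscale _ H r a).
Proof.
case/ginH => s hs; apply/ginH; exists s => l; case: (hs l) => c [hc e].
exists (fun n => r *: c n); split; first by move=> n; apply: (HcZ (gr l)).
by rewrite /= e scaler_sumr.
Qed.

Lemma ginHx a : @gin _ H a -> @gin _ H (@gx _ H a).
Proof.
case/ginH => s hs; apply/ginH; exists (map (fun n => n + 1) s) => l.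
case: (hs l) => c [hc e].
exists (fun m => xop l (c (m - 1))); split.
  by move=> m; rewrite -{1}(subrK 1 m); apply: (Hcx (gr l)).
rewrite /= e big_map; have /= -> := iter_sum (gr l) 1.
by apply: eq_bigr => n _; rewrite addrK.
Qed.

Lemma iterH j (h : gcar H) l : iter j (@gx _ H) h l = iter j (xop l) (h l).
Proof. by elim: j => //= j ->. Qed.

Lemma actH a (h : gcar H) l : @act _ H a h l = act (Hs l) a (h l).
Proof.
rewrite /act; elim: (index_iota 0 (size a)) => //= i r ->.
by rewrite iterH.
Qed.

Definition emb (l : L) (v : V l) : gcar H := fun l' =>
  match excluded_middle_informative (l = l') with
  | left e => eq_rect l V v l' e
  | right _ => 0
  end.

Lemma emb_at l v : emb l v l = v.
Proof.
rewrite /emb; case: excluded_middle_informative => [e|] //.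
by rewrite -eq_rect_eq.
Qed.

Lemma emb_ind (P : forall l', V l' -> Prop) l v :
  P l v -> (forall l', P l' 0) -> forall l', P l' (emb l v l').
Proof.
move=> h0 h1 l'; rewrite /emb; case: excluded_middle_informative => [e|_]; last exact: h1.
by case: l' / e.
Qed.

Lemma ginH_emb l v : @gin _ H (emb l v).
Proof.
have [s [c [_ hc e]]] := Hc_dec (gr l) v.
apply/ginH; exists s; apply: (emb_ind (fun l' w => exists c : int -> V l',
   (forall n, Hc l' n (c n)) /\ w = \sum_(n <- s) c n)).
  by exists c.
move=> l'; exists (fun _ => 0); split; first by move=> n; apply: (Hc0 (gr l')).
by rewrite big1.
Qed.

Lemma gammaS l (v : V l) : gamma (Hs l) v <-> exists j, iter j (xop l) v = 0.
Proof. by split; [case|move=> h; split]. Qed.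

Lemma gammaH (h : gcar H) : gamma H h <-> @gin _ H h /\ exists j, forall l, iter j (xop l) (h l) = 0.
Proof.
split; case=> hi [j hj]; split => //; exists j => l.
  by rewrite -iterH; apply: hj.
by rewrite /= iterH; apply: hj.
Qed.

Lemma HSL_leH e : HSL_le H e <-> forall l, HSL_le (Hs l) e.
Proof.
split.
- move=> hH l v /gammaS [j hj].
  have : gamma H (emb l v).
    apply/gammaH; split; first exact: ginH_emb.
    exists j; apply: (emb_ind (fun l' w => iter j (xop l') w = 0)) => // l'.
    exact: (iter0 (gr l')).
  move/hH/(_ l); rewrite /= iterH emb_at //.
- move=> hl h /gammaH [hi [j hj]] l; rewrite /= iterH.
  by apply: hl; apply/gammaS; exists j.
Qed.

Lemma partI (I : {poly R} -> Prop) : InG p H I <-> exists B : L -> {poly R} -> Prop,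
  (forall l, InG p (Hs l) (B l)) /\ (forall a, I a <-> forall l, B l a).
Proof.
split.
- case=> N [sN [gI aI mI]].
  case: sN => _ [sN0 [sND [sNN [sNZ sNx]]]].
  pose Nl l (v : V l) := exists h, N h /\ h l = v.
  have subl : forall l, submodule (Hs l) (Nl l).
    move=> l; split; first by [].
    split; first by exists (@g0 _ H).
    split; first by move=> _ _ [h1 [n1 <-]] [h2 [n2 <-]]; exists (@gadd _ H h1 h2); split => //; apply: sND.
    split; first by move=> _ [h1 [n1 <-]]; exists (@gopp _ H h1); split => //; apply: sNN.
    split; first by move=> r _ [h1 [n1 <-]]; exists (@gscale _ H r h1); split => //; apply: sNZ.
    by move=> _ [h1 [n1 <-]]; exists (@gx _ H h1); split => //; apply: sNx.
  have gK := fun l => Kann_grann (xop l) (Hc l) pchar_p (Nl l).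
  exists (fun l => Kann p (xop l) (Hc l) (Nl l)); split.
    by move=> l; exists (Nl l); split => //; apply: gK.
  move=> a; split.
  + move=> ha l; exists I; split => //.
    move=> b _ hb [h [nh <-]]; rewrite -actH; exact: (aI b h hb nh l).
  + move=> ha; apply: (mI (fun a => forall l, Kann p (xop l) (Hc l) (Nl l) a)) => //.
      by apply: graded_ideal_cap => l; case: (gK l).
    move=> b h hb nh l; rewrite /= actH; case: (gK l) => _ an _.
    by apply: an (hb l) _; exists h.
- case=> B [hB e]; have [Nf hN] := dchoice hB.
  have sNf : forall l, submodule (Hs l) (Nf l) by move=> l; case: (hN l).
  pose N (h : gcar H) := @gin _ H h /\ forall l, Nf l (h l).
  exists N; split.
    split; first by move=> h [].
    split.
      split; first exact: ginH0.
      by move=> l; case: (sNf l) => _ [].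
    split.
      move=> u v [gu nu] [gv nv]; split; first exact: ginHD.
      by move=> l; case: (sNf l) => _ [_ [h _]]; apply: h.
    split.
      move=> u [gu nu]; split; first exact: ginHN.
      by move=> l; case: (sNf l) => _ [_ [_ [h _]]]; apply: h.
    split.
      move=> r u [gu nu]; split; first exact: ginHZ.
      by move=> l; case: (sNf l) => _ [_ [_ [_ [h _]]]]; apply: h.
    move=> u [gu nu]; split; first exact: ginHx.
    by move=> l; case: (sNf l) => _ [_ [_ [_ [_ h]]]]; apply: h.
  apply: (is_grann_ext (I := fun a => forall l, B l a)); first by move=> a; split => /e.
  split.
  + by apply: graded_ideal_cap => l; case: (hN l) => _ [].
  + move=> a h ha [gh nh] l; rewrite /= actH.
    by case: (hN l) => _ [_ an _]; apply: an.
  + move=> J gJ aJ a ja l; case: (hN l) => _ [_ _ mx]; apply: (mx J gJ) => //.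
    move=> b v jb hv.
    have nE : N (emb l v).
      split; first exact: ginH_emb.
      apply: (emb_ind Nf) => // l'; by case: (sNf l') => _ [].
    by have := aJ b _ jb nE l; rewrite /= actH emb_at.
Qed.

Lemma partII (G' : ({poly R} -> Prop) -> Prop) : inhabited L ->
  (forall l I, InG p (Hs l) I <-> G' I) -> forall I, InG p H I <-> G' I.
Proof.
case=> l0 hG I; split.
- case/partI => B [hB e].
  have : InG p (Hs l0) (fun a => forall l, B l a).
    by apply: (InG_cap pchar_p (gr l0)) => l; apply/(hG l0)/(hG l).
  move/(InG_ext (I' := I)) => h; apply/(hG l0)/h => a; split => /e //.
- move=> hI; apply/partI; exists (fun _ => I); split; first by move=> l; apply/hG.
  by move=> a; split => [h _|/(_ l0)].
Qed.

Set Implicit Arguments.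
Lemma HSL_Some (M : gmod R) e : HSL M = Some e ->
  HSL_le M e /\ forall e', HSL_le M e' -> (e <= e')%N.
Proof.
rewrite /HSL; case: excluded_middle_informative => // h [<-].
case: ex_minnP => m /pbP hm hmin; split => // e' he'; apply: hmin; exact/pbP.
Qed.

Lemma HSL_ex (M : gmod R) e : HSL_le M e -> exists e', HSL M = Some e' /\ (e' <= e)%N.
Proof.
move=> he; case E: (HSL M) => [e'|].
  by exists e'; split => //; case: (HSL_Some E) => _ /(_ _ he).
by move: E; rewrite /HSL; case: excluded_middle_informative => // [[]]; exists e.
Qed.

Lemma HSL_mono l e e' : HSL_le (Hs l) e -> (e <= e')%N -> HSL_le (Hs l) e'.
Proof.
move=> h le v hv; rewrite /= -(subnK le) iterD.
by have /= -> := h v hv; apply: (iter0 (gr l)).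
Qed.

Lemma partIII : ((forall l, ole (HSL (Hs l)) (HSL H)) /\
       (forall o, (forall l, ole (HSL (Hs l)) o) -> ole (HSL H) o)) /\
      (torsion_free H <-> forall l, torsion_free (Hs l)).
Proof.
split; last exact: (HSL_leH 0).
split.
- move=> l; case E: (HSL H) => [e|]; last by case: (HSL (Hs l)).
  case: (HSL_Some E) => /HSL_leH /(_ l) /HSL_ex [e' [-> le]] _; exact: le.
- case=> [m|] hl; last by case: (HSL H).
  have hm : forall l, HSL_le (Hs l) m.
    move=> l; move: (hl l); case E: (HSL (Hs l)) => [m'|] //= le.
    by case: (HSL_Some E) => h _; apply: HSL_mono h le.
  by case: (HSL_ex (proj2 (HSL_leH m) hm)) => e' [-> le]; exact: le.
Qed.

Lemma gammaD l (u v : V l) : gamma (Hs l) u -> gamma (Hs l) v -> gamma (Hs l) (u + v).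
Proof.
move=> /gammaS [j1 h1] /gammaS [j2 h2]; apply/gammaS; exists (j2 + j1)%N.
rewrite (iterD0 (gr l)) iterD h1 (iter0 (gr l)) add0r addnC iterD h2.
exact: (iter0 (gr l)).
Qed.

Lemma gammaN l (u : V l) : gamma (Hs l) u -> gamma (Hs l) (- u).
Proof.
by move=> /gammaS [j h]; apply/gammaS; exists j; rewrite (iterN (gr l)) h oppr0.
Qed.

Lemma gamma0 l (u : V l) : u = 0 -> gamma (Hs l) u.
Proof. by move=> ->; apply/gammaS; exists 0%N. Qed.

Lemma gamma_sum l (s : seq int) (c : int -> V l) :
  (forall n, gamma (Hs l) (c n)) -> gamma (Hs l) (\sum_(n <- s) c n).
Proof.
move=> h; elim: s => [|n s IH]; first by rewrite big_nil; apply: gamma0.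
by rewrite big_cons; apply: gammaD.
Qed.

Lemma partIV : HSL H <> None ->
  (forall h, gamma H h <->
     @gin _ (gprod (fun l => restrict (Hs l) (gamma (Hs l)))) h) /\
  giso (quot H (gamma H)) (gprod (fun l => quot (Hs l) (gamma (Hs l)))).
Proof.
case E: (HSL H) => [e|] // _.
have hl : forall l, HSL_le (Hs l) e by apply/HSL_leH; case: (HSL_Some E).
split.
- move=> h; split.
  + case/gammaH => /ginH_uniq [s [us hs]] [j hj]; exists s => l.
    case: (hs l) => c [hc ec].
    exists (fun n => if n \in s then c n else 0); split.
      move=> n; case: ifP => ns; last by split; [apply: (Hc0 (gr l))|apply: gamma0].
      split => //; apply/gammaS; exists j.
      have := Hc_uniq (gr l) (s := map (fun n => n + j%:Z) s)
        (c := fun m => iter j (xop l) (c (m - j%:Z))).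
      rewrite map_inj_uniq; last exact: addIr.
      move=> /(_ us) h1.
      have /h1 : forall n, Hc l n (iter j (xop l) (c (n - j%:Z))).
        by move=> m; rewrite -{1}(subrK j%:Z m); apply: (Hciter (gr l)).
      rewrite big_map; under eq_bigr do rewrite addrK.
      rewrite -(iter_sum (gr l)) -ec hj => /(_ erefl (n + j%:Z)).
      by rewrite addrK; apply; apply: map_f.
    rewrite /= /gsum foldr_sum ec; apply: eq_big_seq => n ns /=; by rewrite ns.
  + case=> s hs; apply/gammaH; split.
      apply/ginH; exists s => l; case: (hs l) => c [hc ec]; exists c; split.
        by move=> n; case: (hc n).
      by move: ec; rewrite /= /gsum foldr_sum.
    exists e => l; case: (hs l) => c [hc ec]; move: ec; rewrite /= /gsum foldr_sum => ->.
    rewrite (iter_sum (gr l)) big1 // => n _; apply: (hl l); by case: (hc n).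
- exists id; split.
    move=> a /ginH [s hs]; exists s => l; case: (hs l) => c [hc ec]; exists c; split.
      by move=> n; exists (c n); split => //; apply: gamma0; rewrite /= subrr.
    by apply: gamma0; rewrite /= /gsum foldr_sum ec subrr.
  split.
    by move=> a b _ _ /gammaH [_ [j hj]] l; apply/gammaS; exists j; apply: hj.
  split; first by move=> a b _ _ l; apply: gamma0; rewrite /= subrr.
  split; first by move=> r a _ l; apply: gamma0; rewrite /= subrr.
  split; first by move=> a _ l; apply: gamma0; rewrite /= subrr.
  split.
    move=> n a _ [w [hw /gammaH [_ [j hj]]]] l; exists (w l); split => //.
    by apply/gammaS; exists j; apply: hj.
  split.
    move=> a b ga gb hab; apply/gammaH; split; first by apply: ginHD => //; apply: ginHN.
    by exists e => l; apply: (hl l); apply: hab.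
  move=> b [s hs].
  have [c hc] := dchoice hs.
  have hw : forall l, exists w : int -> V l, forall n, Hc l n (w n) /\ gamma (Hs l) (c l n + - w n).
    by move=> l; case: (hc l) => h1 _; apply: (@dchoice int (fun _ => V l) (fun n w => Hc l n w /\ gamma (Hs l) (c l n + - w))).
  have [w hw'] := dchoice hw.
  exists (fun l => \sum_(n <- s) w l n); split.
    apply/ginH; exists s => l; exists (w l); split => //; by move=> n; case: (hw' l n).
  move=> l /=.
  case: (hc l) => _; rewrite /= /gsum foldr_sum => hb.
  have := gammaN (gammaD hb (gamma_sum s (fun n => proj2 (hw' l n)))).
  by rewrite sumrB addrA subrK opprB.
Qed.
End Prod.

Theorem lemma2p3 (R : comNzRingType) (p : nat) (Lam : Type)
  (V : Lam -> lmodType R) (xop : forall l, V l -> V l)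
  (Hc : forall l, int -> V l -> Prop) :
  p \in [pchar R] -> noetherian R -> inhabited Lam ->
  (forall l, graded_rxf p (xop l) (Hc l)) ->
  let Hs := fun l => single (xop l) (Hc l) in
  let H := gprod Hs in
  [/\ (forall I, InG p H I <->
        exists B : Lam -> {poly R} -> Prop,
          (forall l, InG p (Hs l) (B l)) /\ (forall a, I a <-> forall l, B l a)),
      (forall G' : ({poly R} -> Prop) -> Prop,
        (forall I, G' I -> graded_ideal p I) ->
        (forall l I, InG p (Hs l) I <-> G' I) ->
        forall I, InG p H I <-> G' I),
      ((forall l, ole (HSL (Hs l)) (HSL H)) /\
       (forall o, (forall l, ole (HSL (Hs l)) o) -> ole (HSL H) o)) /\
      (torsion_free H <-> forall l, torsion_free (Hs l)) &
      (HSL H <> None ->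
        (forall h, gamma H h <->
           @gin _ (gprod (fun l => restrict (Hs l) (gamma (Hs l)))) h) /\
        giso (quot H (gamma H)) (gprod (fun l => quot (Hs l) (gamma (Hs l)))))].
Proof.
move=> pc _ inh gr Hs H; split.
- exact: (partI R p Lam V xop Hc pc gr).
- by move=> G' _ hG; apply: (partII R p Lam V xop Hc pc gr).
- exact: (partIII gr).
- exact: (partIV gr).
Qed.
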